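(* Let $\rho,\sigma\in\mathrm{Rect}^\ast(n)$ and let $\lambda\mapsto\lambda^\ast$ denote conjugation of partitions. Then: (1) $A(\rho^\ast)=A(\rho)^\ast$ and $s(\rho^\ast)=s(\rho)^\ast$; (2) $d_{\mathrm{sup}}(\rho,\sigma)=d_{\mathrm{sup}}(\rho^\ast,\sigma^\ast)$; (3) conjugation maps the support geodesics from $\rho$ to $\sigma$ bijectively onto the support geodesics from $\rho^\ast$ to $\sigma^\ast$, and hence $\mathrm{Corr}_{\mathrm{all}}(\rho^\ast,\sigma^\ast)=\mathrm{Corr}_{\mathrm{all}}(\rho,\sigma)^\ast$.
   Context: The partition graph $G_n$ has as vertices the integer partitions of $n$; two partitions are adjacent if one is obtained from the other by a single elementary unit transfer followed by reordering: decrease one part by $1$ and either increase a different part by $1$ or create a new part equal to $1$, then delete a part that became $0$ and sort in nonincreasing order (the result being different from the original). Conjugation transposes the Ferrers diagram; it is applied elementwise to sets, edges and paths. $\mathrm{Rect}^\ast(n)=\{(a^b):ab=n,\ a,b\ge2\}$, where $(a^b)$ has $b$ parts equal to $a$. For $\rho=(a^b)\in\mathrm{Rect}^\ast(n)$ let $\alpha(\rho)=(a+1,a^{\,b-2},a-1)$ (equal to $(a+1,a-1)$ if $b=2$) and $\beta(\rho)=(a^{\,b-1},a-1,1)$; the attachment pair is $A(\rho)=\{\alpha(\rho),\beta(\rho)\}$ and the support edge is $s(\rho)=\alpha(\rho)\beta(\rho)$. The support distance $d_{\mathrm{sup}}(\rho,\sigma)\in\mathbb N_0\cup\{\infty\}$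 is the minimum of the graph distances in $G_n\setminus\mathrm{Rect}^\ast(n)$ between a vertex of $A(\rho)$ and a vertex of $A(\sigma)$, and $\infty$ if no path in $G_n\setminus\mathrm{Rect}^\ast(n)$ joins them. When $d_{\mathrm{sup}}(\rho,\sigma)<\infty$, a support geodesic from $\rho$ to $\sigma$ is a shortest path in $G_n\setminus\mathrm{Rect}^\ast(n)$ joining some vertex of $A(\rho)$ to some vertex of $A(\sigma)$, i.e. of length $d_{\mathrm{sup}}(\rho,\sigma)$; $\mathrm{Corr}_{\mathrm{all}}(\rho,\sigma)$ is the union of all support geodesics from $\rho$ to $\sigma$, and $\mathrm{Corr}_{\mathrm{all}}(\rho,\sigma)=\varnothing$ if $d_{\mathrm{sup}}(\rho,\sigma)=\infty$. *)

(* Defs.v *)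
From mathcomp Require Import all_boot all_order.
From mathcomp Require Import boolp classical_sets.

Set Implicit Arguments.
Unset Strict Implicit.
Unset Printing Implicit Defensive.

Local Open Scope classical_set_scope.

Definition is_part (n : nat) (l : seq nat) : bool :=
  [&& sorted geq l, all (fun x => 0 < x) l & sumn l == n].

(* One elementary unit transfer: decrease part i by 1 and increase part j
   by 1, where j = size l means "create a new part equal to 1"
   (incr_nth pads with a 0); then delete zero parts and sort nonincreasingly. *)
Definition transfer (l : seq nat) (i j : nat) : seq nat :=
  sort geq [seq x <- incr_nth (set_nth 0 l i (nth 0 l i).-1) j | 0 < x].

Definition step (l m : seq nat) : bool :=
  [exists i : 'I_(size l), exists j : 'I_(size l).+1,
     (val i != val j) && (m == transfer l i j)] && (m != l).

Definition adj (n : nat) (l m : seq nat) : bool :=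
  [&& is_part n l, is_part n m & step l m || step m l].

Definition conj (l : seq nat) : seq nat :=
  mkseq (fun k => count (fun x => k < x) l) (foldr maxn 0 l).

(* Rect*(n) = { (a^b) : a*b = n, a,b >= 2 }, (a^b) = b parts equal to a. *)
Definition is_rect (n : nat) (l : seq nat) : Prop :=
  exists a b, [/\ 2 <= a, 2 <= b, a * b = n & l = nseq b a].

Definition alpha (rho : seq nat) : seq nat :=
  let a := head 0 rho in let b := size rho in
  a.+1 :: nseq (b - 2) a ++ [:: a.-1].

Definition beta (rho : seq nat) : seq nat :=
  let a := head 0 rho in let b := size rho in
  nseq (b - 1) a ++ [:: a.-1; 1].

Definition attach (rho : seq nat) : seq (seq nat) := [:: alpha rho; beta rho].
Definition support_edge (rho : seq nat) : seq nat * seq nat := (alpha rho, beta rho).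

Definition edge_eq (e f : seq nat * seq nat) : Prop :=
  (e.1 = f.1 /\ e.2 = f.2) \/ (e.1 = f.2 /\ e.2 = f.1).

Definition edge_conj (e : seq nat * seq nat) : seq nat * seq nat :=
  (conj e.1, conj e.2).

(* A walk x :: q in G_n \ Rect*(n) from a vertex of A(rho) to a vertex of
   A(sigma); its length is size q. *)
Definition supwalk (n : nat) (rho sigma : seq nat) (p : seq (seq nat)) : Prop :=
  match p with
  | [::] => False
  | x :: q =>
      [/\ x \in attach rho, last x q \in attach sigma, path (adj n) x q
        & forall y, y \in p -> is_part n y /\ ~ is_rect n y]
  end.

Definition dsup_pred (n : nat) (rho sigma : seq nat) : pred nat :=
  fun k => `[< exists p, supwalk n rho sigma p /\ size p = k.+1 >].

(* Support distance: Some d, or None for infinity. *)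
Definition dsup (n : nat) (rho sigma : seq nat) : option nat :=
  match pselect (exists k, dsup_pred n rho sigma k) with
  | left H => Some (ex_minn H)
  | right _ => None
  end.

Definition sup_geodesic (n : nat) (rho sigma : seq nat) (p : seq (seq nat)) : Prop :=
  supwalk n rho sigma p /\ dsup n rho sigma = Some (size p).-1.

(* Corr_all(rho,sigma): union of all support geodesics, as a vertex set and
   an edge set (edges stored in both orientations). *)
Definition corr_vert (n : nat) (rho sigma : seq nat) : set (seq nat) :=
  [set x | exists p, sup_geodesic n rho sigma p /\ x \in p].

Definition corr_edge (n : nat) (rho sigma : seq nat) : set (seq nat * seq nat) :=
  [set e | exists p, sup_geodesic n rho sigma p /\
     exists i, i.+1 < size p /\
       edge_eq e (nth [::] p i, nth [::] p i.+1)].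

(* Main.v *)
Require Import Defs.
From mathcomp Require Import all_boot all_order.
From mathcomp Require Import boolp classical_sets.
From mathcomp Require Import zify.
Local Open Scope classical_set_scope.
Set Implicit Arguments.
Unset Strict Implicit.
Unset Printing Implicit Defensive.


Definition pos (x : nat) : bool := 0 < x.

Lemma mem_le_max l x : x \in l -> x <= foldr maxn 0 l.
Proof.
elim: l => [|y l IH] //=; rewrite in_cons => /orP [/eqP ->|h].
  by rewrite leq_maxl.
by rewrite leq_max (IH h) orbT.
Qed.

Lemma nth_conj l k : nth 0 (conj l) k = count (fun x => k < x) l.
Proof.
rewrite /conj; case: (ltnP k (foldr maxn 0 l)) => h.
  by rewrite nth_mkseq.
rewrite nth_default ?size_mkseq //; apply/esym/eqP.
rewrite eqn0Ngt -has_count; apply/hasPn => x /mem_le_max hx.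
by rewrite -leqNgt (leq_trans hx h).
Qed.

Lemma has_max l k : k < foldr maxn 0 l -> has (fun x => k < x) l.
Proof.
elim: l => [|x l IH] //=; rewrite leq_max => /orP [->//|h].
by rewrite IH ?orbT.
Qed.

Lemma conj_pos l : all (fun x => 0 < x) (conj l).
Proof.
apply/(all_nthP 0) => k; rewrite size_mkseq => hk.
by rewrite nth_mkseq // -has_count has_max.
Qed.

Lemma conj_sorted l : sorted geq (conj l).
Proof.
rewrite /conj /mkseq sorted_map.
apply: sub_sorted (iota_ltn_sorted 0 _) => k k' /= hkk'.
apply: sub_count => x /= h; exact: ltn_trans hkk' h.
Qed.

Lemma geq_trans : transitive geq.
Proof. move=> a b c /= h1 h2; exact: leq_trans h2 h1. Qed.

Lemma conj_transpose l i k : sorted geq l ->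
  (i < count (fun x => k < x) l) = (k < nth 0 l i).
Proof.
elim: l i => [|x l IH] i /=; first by rewrite nth_nil.
move=> hp; have hs := path_sorted hp.
have hall := order_path_min geq_trans hp.
have c0 : ~~ (k < x) -> count (fun x => k < x) l = 0.
  move=> hk; apply/eqP; rewrite eqn0Ngt -has_count; apply/hasPn => y hy.
  have := allP hall y hy => /= hyx; apply/negP => hky.
  by move/negP: hk; apply; exact: leq_trans hky hyx.
have n0 : forall i, nth 0 l i <= x.
  move=> j; case: (ltnP j (size l)) => h.
    exact: (allP hall) _ (mem_nth 0 h).
  by rewrite nth_default.
case: i => [|i] /=.
  by case hk: (k < x) => //; rewrite ?c0 ?hk.
rewrite -IH //; case hk: (k < x) => //.
rewrite c0 ?hk //; apply/esym/negbTE; rewrite -leqNgt.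

Qed.

Lemma pos_nth l i : all (fun x => 0 < x) l -> i < size l -> 0 < nth 0 l i.
Proof. by move=> /allP h hi; apply: h; apply: mem_nth. Qed.

Lemma eq_from_nth_pos l m : all (fun x => 0 < x) l -> all (fun x => 0 < x) m ->
  (forall i, nth 0 l i = nth 0 m i) -> l = m.
Proof.
move=> hl hm e.
have hsz : size l = size m.
  apply/eqP; rewrite eqn_leq; apply/andP; split; rewrite leqNgt; apply/negP => h.
    by have := pos_nth hl h; rewrite e nth_default.
  by have := pos_nth hm h; rewrite -e nth_default.
by apply: (eq_from_nth (x0 := 0)) hsz _ => i _.
Qed.

Lemma ltn_ext A B : (forall k, (k < A) = (k < B)) -> A = B.
Proof.
move=> h; case: (ltngtP A B) => // hab.
  by move: (h A); rewrite ltnn hab.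
by move: (h B); rewrite ltnn hab.
Qed.

Lemma conjK l : sorted geq l -> all (fun x => 0 < x) l -> conj (conj l) = l.
Proof.
move=> hs hp; apply: eq_from_nth_pos => //; first exact: conj_pos.
move=> i; rewrite nth_conj; apply: ltn_ext => k.
by rewrite conj_transpose ?conj_sorted // nth_conj conj_transpose.
Qed.

Lemma count_sum_seq (p : pred nat) l : count p l = \sum_(x <- l) p x.
Proof. by elim: l => [|x l IH]; rewrite ?big_nil ?big_cons //= IH. Qed.

Lemma sum_ltn x M : \sum_(0 <= k < M) (k < x) = minn x M.
Proof.
elim: M => [|M IH]; first by rewrite big_geq // minn0.
by rewrite big_nat_recr //= IH; lia.
Qed.

Lemma sumn_conj l : sumn (conj l) = sumn l.
Proof.
rewrite /conj /mkseq sumnE big_map.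
under eq_bigr do rewrite count_sum_seq.
rewrite exchange_big /= [RHS]sumnE; apply: eq_big_seq => x hx.
have := sum_ltn x (foldr maxn 0 l); rewrite /index_iota subn0 => ->.
by apply/minn_idPl; apply: mem_le_max.
Qed.

Lemma part_conj n l : is_part n l -> is_part n (conj l).
Proof.
case/and3P => hs hp /eqP hn.
by rewrite /is_part conj_sorted conj_pos sumn_conj hn eqxx.
Qed.

Lemma part_conjK n l : is_part n l -> conj (conj l) = l.
Proof. by case/and3P => hs hp _; apply: conjK. Qed.

Lemma same_counts l m : sorted geq l -> all (fun x => 0 < x) l ->
  sorted geq m -> all (fun x => 0 < x) m ->
  (forall k, count (fun x => k < x) l = count (fun x => k < x) m) -> l = m.
Proof.
move=> hl pl hm pm e; rewrite -(conjK hl pl) -(conjK hm pm); congr conj.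
apply: eq_from_nth_pos; try exact: conj_pos.
by move=> i; rewrite !nth_conj.
Qed.

Lemma size_le_sumn l : all (fun x => 0 < x) l -> size l <= sumn l.
Proof. elim: l => [|x l IH] //= /andP [hx hl]; have := IH hl; lia. Qed.

Lemma max_le_sumn l : foldr maxn 0 l <= sumn l.
Proof. elim: l => [|x l IH] //=; rewrite geq_max leq_addr /=; lia. Qed.

Lemma sumn_sum l N : size l <= N -> sumn l = \sum_(0 <= t < N) nth 0 l t.
Proof.
elim: l N => [|x l IH] [|N] //=.
- by move=> _; rewrite big_geq.
- by move=> _; rewrite big1 // => t _; rewrite nth_nil.
- by move=> h; rewrite big_nat_recl //= (IH N h).
Qed.

Lemma count_sum (p : pred nat) l N : ~~ p 0 -> size l <= N ->
  count p l = \sum_(0 <= t < N) p (nth 0 l t).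
Proof.
move=> hp; elim: l N => [|x l IH] [|N] //=.
- by move=> _; rewrite big_geq.
- by move=> _; rewrite big1 // => t _; rewrite nth_nil (negbTE hp).
- by move=> h; rewrite big_nat_recl //= (IH N h).
Qed.

Lemma count_set_nth (p : pred nat) s i v : i < size s ->
  count p (set_nth 0 s i v) + p (nth 0 s i) = count p s + p v.
Proof.
elim: s i => [|x s IH] [|i] //=; first by lia.
by move=> h; have := IH i h; lia.
Qed.

Lemma count_incr_nth (p : pred nat) s j : ~~ p 0 -> j <= size s ->
  count p (incr_nth s j) + p (nth 0 s j) = count p s + p (nth 0 s j).+1.
Proof.
move=> hp; elim: s j => [|x s IH] [|j] //=.
- by move=> _; rewrite (negbTE hp); lia.
- by lia.
- by move=> h; have := IH j h; lia.
Qed.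

Lemma count_transfer (p : pred nat) l i j : (forall x, p x -> 0 < x) ->
  count p (transfer l i j) = count p (incr_nth (set_nth 0 l i (nth 0 l i).-1) j).
Proof.
move=> hp; rewrite /transfer ((permP (permEl (perm_sort _ _))) p) count_filter.
by apply: eq_count => x /=; case h: (p x) => //=; rewrite hp.
Qed.

Lemma step_counts l m : sorted geq l -> all (fun x => 0 < x) l ->
  sorted geq m -> all (fun x => 0 < x) m -> step l m ->
  exists x y, [/\ x \in l, 0 < x, x.-1 != y &
    forall k, count (fun z => k < z) m + (k == x.-1) = count (fun z => k < z) l + (k == y)].
Proof.
move=> hl pl hm pm /andP [/existsP [i /existsP [j /andP [hij /eqP hmt]]] hml].
have hi := ltn_ord i; have hj := ltn_ord j.
have E : forall k, count (fun z => k < z) m + (k == (nth 0 l i).-1)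
        = count (fun z => k < z) l + (k == nth 0 l j).
  move=> k; rewrite hmt count_transfer; last by move=> z h; exact: leq_ltn_trans h.
  have := @count_incr_nth (fun z => k < z) (set_nth 0 l i (nth 0 l i).-1) j isT.
  have hji : (val j == val i) = false by rewrite eq_sym; exact: negbTE hij.
  rewrite size_set_nth nth_set_nth /= hji.
  have hpos := pos_nth pl hi.
  have := @count_set_nth (fun z => k < z) l i (nth 0 l i).-1 hi => /=.
  have -> : maxn i.+1 (size l) = size l by lia.
  move=> h1 /(_ hj) h2; lia.
exists (nth 0 l i), (nth 0 l j); split => //.
- exact: mem_nth.
- exact: pos_nth.
- apply/negP => /eqP exy; move/negP: hml; apply.
  apply/eqP; apply: same_counts => // k; have := E k; rewrite exy; lia.
Qed.

Lemma sum_eq_a a N : a < N -> \sum_(0 <= k < N) (k == a) = 1.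
Proof.
elim: N => [|N IH] // h; rewrite big_nat_recr //=.
case: (ltnP a N) => h'; first by rewrite IH //; lia.
have -> : \sum_(0 <= k < N) (k == a) = 0.
  by apply/eqP; rewrite sum_nat_seq_eq0; apply/allP => k; rewrite mem_index_iota; lia.
lia.
Qed.

Lemma part_bounds n l : is_part n l -> size l <= n /\ foldr maxn 0 l <= n.
Proof.
case/and3P => _ hp /eqP <-; split; [exact: size_le_sumn | exact: max_le_sumn].
Qed.

Lemma S1 n l m : is_part n l -> is_part n m -> step l m ->
  \sum_(0 <= k < n) minn (nth 0 (conj l) k) (nth 0 (conj m) k) = n.-1.
Proof.
move=> hl hm st; have [hsl hml] := part_bounds hl.
move: (hl) (hm) => /and3P [sl pl /eqP nl] /and3P [sm pm _].
have [x [y [hx x0 hxy E]]] := step_counts sl pl sm pm st.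
have xn : x.-1 < n by have := mem_le_max hx; lia.
have Sl : \sum_(0 <= k < n) nth 0 (conj l) k = n.
  have [hs _] := part_bounds (part_conj hl).
  by rewrite -sumn_sum // sumn_conj.
suff : \sum_(0 <= k < n) minn (nth 0 (conj l) k) (nth 0 (conj m) k) + 1 = n by lia.
rewrite -(sum_eq_a xn) -big_split /= -[RHS]Sl; apply: eq_bigr => k _.
rewrite !nth_conj; have := E k; move: hxy; lia.
Qed.


Lemma sum1 (F : nat -> nat) N : \sum_(0 <= k < N) F k = 1 ->
  exists r, [/\ r < N, F r = 1 & forall k, k < N -> k != r -> F k = 0].
Proof.
elim: N => [|N IH]; first by rewrite big_geq.
rewrite big_nat_recr //= => h.
case: (posnP (F N)) => hN.
  rewrite hN addn0 in h; have [r [hr Fr Fk]] := IH h.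
  exists r; split => //; first by lia.
  move=> k hk hkr; case: (ltnP k N) => h'; first exact: Fk.
  by have -> : k = N by lia.
have h0 : \sum_(0 <= k < N) F k = 0 by lia.
move/eqP: h0; rewrite sum_nat_seq_eq0 => /allP h0.
exists N; split => //; first by lia.
move=> k hk hkN; have := h0 k; rewrite mem_index_iota => /(_ _) /eqP; apply; lia.
Qed.

Lemma S2 n a b : is_part n a -> is_part n b -> a != b ->
  \sum_(0 <= k < n) minn (nth 0 a k) (nth 0 b k) = n.-1 -> step a b.
Proof.
move=> ha hb hab hsum.
have [sa _] := part_bounds ha; have [sb _] := part_bounds hb.
move: (ha) (hb) => /and3P [sta pa /eqP na] /and3P [stb pb /eqP nb].
have Sa : \sum_(0 <= k < n) nth 0 a k = n by rewrite -sumn_sum.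
have Sb : \sum_(0 <= k < n) nth 0 b k = n by rewrite -sumn_sum.
have n0 : 0 < n.
  rewrite lt0n; apply/eqP => n0'; move: sa sb; rewrite n0' !leqn0 !size_eq0.
  by move=> /eqP ea /eqP eb; move: hab; rewrite ea eb.
have SF : \sum_(0 <= k < n) (nth 0 a k - nth 0 b k) = 1.
  suff : \sum_(0 <= k < n) minn (nth 0 a k) (nth 0 b k) +
         \sum_(0 <= k < n) (nth 0 a k - nth 0 b k) = n by lia.
  rewrite -big_split -[RHS]Sa; apply: eq_bigr => k _ /=; lia.
have SG : \sum_(0 <= k < n) (nth 0 b k - nth 0 a k) = 1.
  suff : \sum_(0 <= k < n) minn (nth 0 a k) (nth 0 b k) +
         \sum_(0 <= k < n) (nth 0 b k - nth 0 a k) = n by lia.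
  rewrite -big_split -[RHS]Sb; apply: eq_bigr => k _ /=; lia.
have [r [rn Fr Fk]] := sum1 SF.
have [s [sn Gs Gk]] := sum1 SG.
have rs : r != s by apply/eqP => e; move: Fr Gs; rewrite e; lia.
have P : forall k, nth 0 b k + (k == r) = nth 0 a k + (k == s).
  move=> k; case: (ltnP k n) => hk.
    case: (eqVneq k r) => [->|kr].
      by move: Fr; rewrite (negbTE rs); lia.
    have := Fk k hk kr; case: (eqVneq k s) => [->|ks]; first by move: Gs; lia.
    by have := Gk k hk ks; lia.
  rewrite !nth_default; try lia.
have ra : r < size a.
  rewrite ltnNge; apply/negP => h; have := P r; rewrite (nth_default 0 h) eqxx.
  by rewrite (negbTE rs); lia.
have sa' : s <= size a.
  rewrite leqNgt; apply/negP => h.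
  have hsb : s < size b.
    rewrite ltnNge; apply/negP => h'; have := P s; rewrite (nth_default 0 h').
    by rewrite eqxx eq_sym (negbTE rs); lia.
  have := P (size a); rewrite (nth_default 0 (leqnn _)).
  have := pos_nth pb (ltn_trans h hsb).
  have -> : (size a == s) = false by apply/negbTE; rewrite neq_ltn h.
  lia.
apply/andP; split; last by rewrite eq_sym.
apply/existsP; exists (Ordinal ra); apply/existsP; exists (Ordinal (sa' : s < (size a).+1)) => /=.
rewrite rs /=; apply/eqP; apply: same_counts => //.
- by rewrite /transfer; apply: sort_sorted => x y; rewrite /= leq_total.
- by rewrite /transfer all_sort filter_all.
move=> k; rewrite count_transfer; last by move=> z h; exact: leq_ltn_trans h.
rewrite (@count_sum _ b n.+1) // ?(leq_trans sb) //.
rewrite (@count_sum _ _ n.+1) //; last first.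
  by rewrite size_incr_nth size_set_nth; case: ifP; lia.
apply: eq_bigr => t _; rewrite nth_incr_nth nth_set_nth /=.
have := P t; rewrite [s == t]eq_sym; case: (eqVneq t r) => [->|tr] /=.
  by rewrite (negbTE rs) /= => h; congr (_ < _); lia.
by move=> h; congr (_ < _); lia.
Qed.

Lemma adj_conj n l m : adj n l m -> adj n (conj l) (conj m).
Proof.
case/and3P => hl hm st; rewrite /adj !(part_conj hl, part_conj hm) /=.
have hne : conj l != conj m.
  apply/negP => /eqP e.
  have elm : l = m by rewrite -(part_conjK hl) e (part_conjK hm).
  by move: st; rewrite elm /step eqxx !andbF.
apply/orP; left; apply: S2 (part_conj hl) (part_conj hm) hne _.
case/orP: st => st; first exact: S1.
rewrite -(S1 hm hl st); apply: eq_bigr => k _; exact: minnC.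
Qed.

Lemma sorted_nseq' b a : sorted geq (nseq b a).
Proof.
case: b => //= b; elim: b => //= b IH; by rewrite leqnn IH.
Qed.

Lemma part_nseq a b : 0 < a -> is_part (a * b) (nseq b a).
Proof.
move=> ha; rewrite /is_part sorted_nseq' all_nseq ha orbT sumn_nseq eqxx.
done.
Qed.

Lemma conj_nseq a b : 0 < b -> conj (nseq b a) = nseq a b.
Proof.
move=> hb; apply: eq_from_nth_pos; first exact: conj_pos.
  by rewrite all_nseq hb orbT.
move=> k; rewrite nth_conj count_nseq nth_nseq; case: (k < a) => //=; lia.
Qed.

Lemma rect_part n rho : is_rect n rho -> is_part n rho.
Proof. by move=> [a [b [ha hb <- ->]]]; apply: part_nseq; lia. Qed.

Lemma rect_conj n rho : is_rect n rho -> is_rect n (conj rho).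
Proof.
move=> [a [b [ha hb hn ->]]]; exists b, a; split => //; first by rewrite mulnC.
apply: conj_nseq; lia.
Qed.

Lemma rect_conj_inv n y : is_part n y -> is_rect n (conj y) -> is_rect n y.
Proof.
move=> hy /rect_conj; by rewrite (part_conjK hy).
Qed.

Lemma nth_nseq_cat c v s k :
  nth 0 (nseq c v ++ s) k = if k < c then v else nth 0 s (k - c).
Proof. rewrite nth_cat size_nseq nth_nseq; by case: (k < c). Qed.

Lemma head_nseq c v : 0 < c -> head 0 (nseq c v) = v.
Proof. by case: c. Qed.

Lemma I1 a b : 2 <= a -> 2 <= b -> alpha (nseq a b) = conj (beta (nseq b a)).
Proof.
move=> ha hb; rewrite /alpha /beta !head_nseq ?size_nseq; try lia.
apply: eq_from_nth_pos; last 1 first.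
- move=> k; rewrite nth_conj count_cat count_nseq /=.
  case: k => [|k] /=; first by lia.
  rewrite nth_nseq_cat; case: ifP => h; first by lia.
  case E: (k - (a - 2)) => [|t] /=; first by lia.
  rewrite nth_nil; lia.
- rewrite /= all_cat all_nseq /=.
  have -> : 0 < b.-1 by lia.
  have -> : 0 < b by lia.
  by rewrite orbT.
- exact: conj_pos.
Qed.

Lemma I2 a b : 2 <= a -> 2 <= b -> beta (nseq a b) = conj (alpha (nseq b a)).
Proof.
move=> ha hb; rewrite /alpha /beta !head_nseq ?size_nseq; try lia.
apply: eq_from_nth_pos; last 1 first.
- move=> k; rewrite nth_conj /= count_cat count_nseq /=.
  rewrite nth_nseq_cat; case: ifP => h; first by lia.
  case E: (k - (a - 1)) => [|[|t]] /=; try lia.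
  rewrite nth_nil; lia.
- rewrite /= all_cat all_nseq /=.
  have -> : 0 < b.-1 by lia.
  have -> : 0 < b by lia.
  by rewrite orbT.
- exact: conj_pos.
Qed.

Lemma attach_conj n rho x : is_rect n rho -> x \in attach rho ->
  conj x \in attach (conj rho).
Proof.
move=> [a [b [ha hb _ ->]]]; rewrite conj_nseq; last by lia.
rewrite /attach !inE => /orP [/eqP->|/eqP->].
  by rewrite -I2 // eqxx orbT.
by rewrite -I1 // eqxx.
Qed.

Lemma part1 n rho : is_rect n rho ->
  (attach (conj rho) =i map conj (attach rho)) /\
   edge_eq (support_edge (conj rho)) (edge_conj (support_edge rho)).
Proof.
move=> [a [b [ha hb _ ->]]]; rewrite conj_nseq; last by lia.
split.
  by move=> x; rewrite /attach /= (I1 ha hb) (I2 ha hb) !inE orbC.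
by right; rewrite /support_edge /edge_conj /= (I1 ha hb) (I2 ha hb).
Qed.

Lemma supwalk_part n r s p y : supwalk n r s p -> y \in p ->
  is_part n y /\ ~ is_rect n y.
Proof. by case: p => // x q [_ _ _ h] /h. Qed.

Lemma W n rho sigma p : is_rect n rho -> is_rect n sigma ->
  supwalk n rho sigma p -> supwalk n (conj rho) (conj sigma) (map conj p).
Proof.
case: p => [|x q] //= hr hs [hx hl hp hall]; split.
- exact: attach_conj hr hx.
- rewrite last_map; exact: attach_conj hs hl.
- rewrite path_map; apply: sub_path hp => u v; exact: adj_conj.
- move=> y hy; have /mapP [z hz ->] : y \in map conj (x :: q) by [].
  have [h1 h2] := hall z hz; split; first exact: part_conj.
  by move/(rect_conj_inv h1).
Qed.

Lemma mapK_walk n r s p : supwalk n r s p -> map conj (map conj p) = p.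
Proof.
move=> H; rewrite -map_comp; apply: map_id_in => y hy /=.
have [h _] := supwalk_part H hy; exact: part_conjK h.
Qed.

Lemma Wc n rho sigma q : is_rect n rho -> is_rect n sigma ->
  supwalk n (conj rho) (conj sigma) q -> supwalk n rho sigma (map conj q).
Proof.
move=> hr hs H; have := W (rect_conj hr) (rect_conj hs) H.
by rewrite (part_conjK (rect_part hr)) (part_conjK (rect_part hs)).
Qed.

Lemma dsup_eq n rho sigma : is_rect n rho -> is_rect n sigma ->
  dsup n rho sigma = dsup n (conj rho) (conj sigma).
Proof.
move=> hr hs.
have E : dsup_pred n rho sigma = dsup_pred n (conj rho) (conj sigma).
  apply: funext => k; rewrite /dsup_pred.
  apply/idP/idP => /asboolP [p [hp hsz]]; apply/asboolP;
    exists (map conj p); rewrite size_map; split => //.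
    exact: W.
  exact: Wc.
by rewrite /dsup E.
Qed.

Lemma G1 n rho sigma p : is_rect n rho -> is_rect n sigma ->
  sup_geodesic n rho sigma p -> sup_geodesic n (conj rho) (conj sigma) (map conj p).
Proof.
move=> hr hs [hw hd]; split; first exact: W.
by rewrite size_map -dsup_eq.
Qed.

Lemma G2 n rho sigma q : is_rect n rho -> is_rect n sigma ->
  sup_geodesic n (conj rho) (conj sigma) q -> sup_geodesic n rho sigma (map conj q).
Proof.
move=> hr hs [hw hd]; split; first exact: Wc.
by rewrite size_map dsup_eq.
Qed.

Unset Implicit Arguments.
Theorem proposition4p10 (n : nat) (rho sigma : seq nat) :
  is_rect n rho -> is_rect n sigma ->
  (* (1) *)
  ((attach (conj rho) =i map conj (attach rho)) /\
   edge_eq (support_edge (conj rho)) (edge_conj (support_edge rho))) /\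
  (* (2) *)
  dsup n rho sigma = dsup n (conj rho) (conj sigma) /\
  (* (3) conjugation is a bijection between the support geodesics *)
  ((forall p, sup_geodesic n rho sigma p ->
              sup_geodesic n (conj rho) (conj sigma) (map conj p)) /\
   (forall p p', sup_geodesic n rho sigma p -> sup_geodesic n rho sigma p' ->
              map conj p = map conj p' -> p = p') /\
   (forall q, sup_geodesic n (conj rho) (conj sigma) q ->
              exists p, sup_geodesic n rho sigma p /\ q = map conj p)) /\
  (* hence the Corr_all identity *)
  (corr_vert n (conj rho) (conj sigma) = conj @` corr_vert n rho sigma /\
   corr_edge n (conj rho) (conj sigma) = edge_conj @` corr_edge n rho sigma).
Proof.
move=> hr hs.
split; first exact: part1 hr.
split; first exact: dsup_eq.
split.
  split; first by move=> p; exact: G1.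
  split.
    move=> p p' hp hp' e.
    by rewrite -(mapK_walk hp.1) e (mapK_walk hp'.1).
  move=> q hq; exists (map conj q); split; first exact: G2.
  by rewrite (mapK_walk hq.1).
split.
  apply/seteqP; split => x.
    move=> [q [hq hx]]; exists (conj x).
      exists (map conj q); split; [exact: G2 | exact: map_f].
    have [h _] := supwalk_part hq.1 hx; exact: part_conjK h.
  move=> [y [p [hp hy]] <-].
  exists (map conj p); split; [exact: G1 | exact: map_f].
apply/seteqP; split => e.
  move=> [q [hq [i [hi he]]]]; case: e he => e1 e2 he.
  have hi' : i < size q by lia.
  have p1 := (supwalk_part hq.1 (mem_nth [::] hi')).1.
  have p2 := (supwalk_part hq.1 (mem_nth [::] hi)).1.
  exists (edge_conj (e1, e2)).
    exists (map conj q); split; first exact: G2.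
    exists i; split; first by rewrite size_map.
    rewrite !(nth_map [::]) // /edge_conj /=.
    by case: he => /= [[-> ->]|[-> ->]]; [left|right].
  rewrite /edge_conj /=.
  by case: he => /= [[-> ->]|[-> ->]]; rewrite (part_conjK p1) (part_conjK p2).
move=> [[e1 e2] [p [hp [i [hi he]]]] <-].
exists (map conj p); split; first exact: G1.
exists i; split; first by rewrite size_map.
have hi' : i < size p by lia.
rewrite !(nth_map [::]) // /edge_conj /=.
by case: he => /= [[-> ->]|[-> ->]]; [left|right].
Qed.
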